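(* Let $G$ be a loop-tangle graph and let $R$ be the disc bounded by the loop, containing the tangle graph. For each positive integer $N$ let $f_N$ be the number of $N$-sided faces of $G$ in $R$. Then \[3f_1 + 2f_2 + f_3 = 3 + \sum_{n=1}^{\infty} n f_{n+4}.\]
   Context: In an oriented knot diagram, a loop is a subarc $\gamma^\dagger$ of the knot such that (1) $\gamma^\dagger$ has exactly one self-crossing $u$, forming a loop bounding a disc $R$; (2) apart from $u$, at every crossing $\gamma^\dagger$ meets, $\gamma^\dagger$ is the under-strand (or at every such crossing it is the over-strand); (3) the two edges incident to $u$ not on the loop lie outside $R$. The tangle consists of the arcs of the knot inside $R$, each crossing the loop transversally at its two endpoints. The loop-tangle graph is obtained from the loop together with the tangle by forgetting over/under information: its vertices are the self-crossing $u$, the crossings of tangle arcs with the loop, and the crossings of the tangle inside $R$, each of degree $4$; it also contains the outward edges (sprouts) leaving the loop, each attached to a single vertex on the loop. An $N$-sided face is a face of this graph inside $R$ whose boundary consists of $N$ edges. *)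

(* Defs.v *)
(* Loop-tangle graphs encoded as combinatorial planar maps
   (rotation systems) of the part of the graph lying in the closed disc R. *)
From mathcomp Require Import all_boot.
Set Implicit Arguments. Unset Strict Implicit. Unset Printing Implicit Defensive.

Section LoopTangle.
Variable D : finType.            (* darts (half-edges) *)
Variables (edge node : D -> D).  (* edge involution, rotation around a vertex *)
Variable o : D.                  (* a dart of the outer face (outside of the loop) *)

Definition face (x : D) : D := node (edge x).

Definition planar_map : Prop :=
  [/\ injective node, involutive edge, (forall x, edge x != x),
      (forall x y, connect [rel a b | (b == node a) || (b == edge a)] x y)
    & 2 * (fcard node D + fcard face D) = #|D| + 4].

(* x is a dart of the outer face (the complement of the disc R) *)
Definition outer (x : D) : bool := fconnect face o x.

Definition on_loop (x : D) : bool := [exists y, outer y && fconnect node x y].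

Definition deg (x : D) : nat := order node x.

(* going straight through the far endpoint of the edge of x (degree 4 there) *)
Definition straight (x : D) : D := node (node (edge x)).

(* The restriction of a loop-tangle graph to the closed disc R:
   - the loop bounds the outer face, and is a simple closed curve (every
     vertex appears once along it);
   - the self-crossing u is the unique loop vertex of degree 2 in R (its two
     other edges are outside R); every other loop vertex has degree 3 in R
     (one tangle arc crossing the loop, its sprout being outside R);
   - tangle crossings inside R have degree 4;
   - the tangle consists of arcs: following a strand straight through interior
     crossings always reaches the loop (no closed strands inside R). *)
Definition loop_tangle_map : Prop :=
  planar_map /\
  (forall x y, outer x -> outer y -> fconnect node x y -> x = y) /\
  [/\
      (forall x, outer x -> (deg x == 2) || (deg x == 3)),
      #|[pred x | outer x & deg x == 2]| = 1,
      (forall x, ~~ on_loop x -> deg x = 4)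
    & (forall x, ~~ on_loop x -> exists n, on_loop (edge (iter n straight x)))].

(* f_N : number of N-sided faces inside R (faces other than the outer one,
   the number of sides being the length of the boundary walk) *)
Definition nfaces (N : nat) : nat :=
  fcard face [pred x | ~~ outer x & order face x == N].

End LoopTangle.

(* Main.v *)
Require Import Defs.
From mathcomp Require Import all_boot zify.
Set Warnings "-notation-overridden".
Set Implicit Arguments. Unset Strict Implicit.

Lemma card_part (T : finType) (a : pred T) (h : T -> nat) K :
  (forall x, h x < K) -> #|a| = \sum_(N < K) #|[pred x | a x & h x == N]|.
Proof.
move=> hK; rewrite -sum1_card.
rewrite (partition_big (fun x => Ordinal (hK x)) xpredT) //=.
apply: eq_bigr => j _; rewrite -sum1_card; apply: eq_bigl => x.
by rewrite inE /=.
Qed.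

Lemma closed_of (T : finType) (f : T -> T) (a : {pred T}) :
  injective f -> (forall x y, fconnect f x y -> x \in a -> y \in a) -> fclosed f a.
Proof.
move=> injf H x y /eqP <-; apply/idP/idP; first by apply: H; apply: fconnect1.
by apply: H; rewrite fconnect_sym //; apply: fconnect1.
Qed.

Lemma order_conn (T : finType) (f : T -> T) x y :
  injective f -> fconnect f x y -> order f x = order f y.
Proof.
move=> injf cxy; rewrite /order; apply: eq_card => z.
by rewrite !inE (same_connect (fconnect_sym injf) cxy).
Qed.

Section Main.
Variables (D : finType) (edge node : D -> D) (o : D).
Hypothesis HL : loop_tangle_map edge node o.

Let fc := face edge node.
Let out := outer edge node o.
Let onl := on_loop edge node o.

Lemma node_inj : injective node. Proof. by case: HL => [[]]. Qed.
Lemma edge_inv : involutive edge. Proof. by case: HL => [[]]. Qed.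
Lemma euler : 2 * (fcard node D + fcard fc D) = #|D| + 4.
Proof. by case: HL => [[]]. Qed.
Lemma out_uniq x y : out x -> out y -> fconnect node x y -> x = y.
Proof. by case: HL => _ [H _]; apply: H. Qed.
Lemma deg23 x : out x -> (deg node x == 2) || (deg node x == 3).
Proof. by case: HL => _ [_ [H _ _ _]]; apply: H. Qed.
Lemma one2 : #|[pred x | out x & deg node x == 2]| = 1.
Proof. by case: HL => _ [_ [_ H _ _]]. Qed.
Lemma deg4 x : ~~ onl x -> deg node x = 4.
Proof. by case: HL => _ [_ [_ _ H _]]; apply: H. Qed.

Lemma fc_inj : injective fc.
Proof. exact: (inj_comp node_inj (inv_inj edge_inv)). Qed.

Lemma nsym : connect_sym (frel node). Proof. exact: fconnect_sym node_inj. Qed.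
Lemma fsym : connect_sym (frel fc). Proof. exact: fconnect_sym fc_inj. Qed.

Lemma out_closed x y : fconnect fc x y -> out x = out y.
Proof. by move=> cxy; apply: (same_connect_r fsym cxy o). Qed.

Lemma onl_closed x y : fconnect node x y -> onl x = onl y.
Proof.
move=> cxy; rewrite /onl /on_loop; apply: eq_existsb => z.
by rewrite (same_connect nsym cxy).
Qed.

Lemma F1 : fcard fc D = 1 + fcard fc [predC out].
Proof.
rewrite (n_compC out); congr (_ + _).
rewrite -(n_comp_connect fsym o); apply: eq_n_comp_r => x //.
Qed.

Definition K := #|D|.+1.
Lemma hK x : order fc x < K.
Proof. by rewrite ltnS /order max_card. Qed.

Lemma F2 : fcard fc [predC out] = \sum_(N < K) nfaces edge node o N.
Proof.
rewrite /n_comp_mem (@card_part _ _ _ _ hK); apply: eq_bigr => N _.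
by apply: eq_card => x; rewrite !inE andbA.
Qed.

Lemma F3 : #|[predC out]| = \sum_(N < K) N * nfaces edge node o N.
Proof.
rewrite (@card_part _ _ _ _ hK); apply: eq_bigr => N _.
rewrite /nfaces mulnC -/fc fcard_order_set //; first exact: fc_inj.
- by apply/subsetP => x; rewrite !inE => /andP[].
apply: (@closed_of D fc _ fc_inj) => x y cxy; rewrite !inE => /andP[h1 h2].
rewrite /= -(order_conn fc_inj cxy) h2 andbT; by have := out_closed cxy; rewrite /out => <-.
Qed.

Lemma f0 : nfaces edge node o 0 = 0.
Proof.
apply: eq_card0 => x; rewrite !inE.
by rewrite eqn0Ngt order_gt0 !andbF.
Qed.


Lemma V2 : #|[predC onl]| = fcard node [predC onl] * 4.
Proof.
rewrite fcard_order_set //; first exact: node_inj.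
  by apply/subsetP => x; rewrite !inE => h; rewrite -/(deg node x) deg4.
apply: (@closed_of D node [predC onl] node_inj) => x y cxy; rewrite !inE.
by rewrite -!topredE /= (onl_closed cxy).
Qed.

Lemma V3 : fcard node onl = #|out|.
Proof.
rewrite /n_comp_mem.
have inj : {in out &, injective (froot node)}.
  move=> y1 y2 h1 h2 /(rootP nsym) c; exact: out_uniq.
rewrite -(card_in_imset inj); apply: eq_card => r; rewrite !inE.
apply/andP/imsetP => [[rr /existsP[y /andP[oy cry]]]|[y oy ->]].
  exists y => //; apply/esym/eqP; rewrite /roots in rr.
  by rewrite -(eqP rr); apply/eqP/esym/(rootP nsym).
split; first exact: roots_root nsym y.
apply/existsP; exists y; move: oy; rewrite -topredE /out /= => ->.
by rewrite nsym; apply: connect_root.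
Qed.

Lemma V4a : #|onl| = \sum_(y in out) deg node y.
Proof.
rewrite -sum1_card.
have e : forall x, onl x -> 1 = \sum_(y in out) (fconnect node y x : nat).
  move=> x /existsP[y0 /andP[oy0 cxy0]].
  rewrite (bigD1 y0) //= nsym cxy0 big1 // => y /andP[oy ny].
  apply/eqP; rewrite eqb0; apply/negP => cyx; move/eqP: ny; apply.
  apply: out_uniq => //; exact: connect_trans cyx cxy0.
rewrite (eq_bigr _ e) exchange_big /=; apply: eq_bigr => y oy.
rewrite /deg /order -sum1_card big_mkcond /= [RHS]big_mkcond /=.
apply: eq_bigr => x _.
have -> : (x \in fconnect node y) = fconnect node y x by [].
case cyx: (fconnect node y x); last by case: (onl x).
suff -> : onl x by [].
apply/existsP; exists y; move: oy; rewrite -topredE /out /= => ->.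
by rewrite nsym cyx.
Qed.

Lemma V4 : #|onl| + 1 = 3 * #|out|.
Proof.
have S2 : \sum_(y in out) (deg node y == 2 : nat) = 1.
  rewrite -[RHS]one2 -sum1_card big_mkcond /= [RHS]big_mkcond /=.
  apply: eq_bigr => y _; rewrite !inE.
  by case: (out y); case: (deg node y == 2).
have -> : 3 * #|out| = \sum_(y in out) 3 by rewrite sum_nat_const mulnC.
rewrite V4a -[X in _ + X = _]S2 -big_split /=.
apply: eq_bigr => y oy.
by case/orP: (deg23 oy) => /eqP ->.
Qed.

End Main.

Lemma ext_sum (g : nat -> nat) K K' : K <= K' -> (forall N, K <= N -> g N = 0) ->
  \sum_(N < K) g N = \sum_(N < K') g N.
Proof.
move=> hk hz; rewrite -!(big_mkord xpredT) (@big_cat_nat _ _ _ K 0 K' _ _ (leq0n K) hk) /=.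
by rewrite [X in _ = _ + X]big_nat_cond [X in _ = _ + X]big1 ?addn0 // => i /andP[/andP[h _] _]; apply: hz.
Qed.

Lemma split5 (g : nat -> nat) K' : 5 <= K' ->
  \sum_(0 <= i < K') g i = g 0 + g 1 + g 2 + g 3 + g 4 + \sum_(5 <= i < K') g i.
Proof.
move=> k5; rewrite (@big_cat_nat _ _ _ 5 0 K' _ _ isT k5) /=.
by rewrite !big_nat_recl // big_geq // !addnA addn0.
Qed.

Lemma sum_lemma (f : nat -> nat) K M : f 0 = 0 ->
  (forall N, K <= N -> f N = 0) -> (forall n, M < n -> f (n + 4) = 0) ->
  4 * \sum_(N < K) f N = \sum_(N < K) N * f N + 3 ->
  3 * f 1 + 2 * f 2 + f 3 = 3 + \sum_(1 <= n < M.+1) n * f (n + 4).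
Proof.
move=> f0 hK hM.
set K' := K + M + 5.
have kk : K <= K' by rewrite /K' -addnA leq_addr.
rewrite (@ext_sum f _ _ kk); last exact: hK.
rewrite (@ext_sum (fun N => N * f N) _ _ kk); last by move=> N /hK ->; rewrite muln0.
rewrite -!(big_mkord xpredT).
have k5 : 5 <= K' by rewrite /K' leq_addl.
rewrite big_distrr /=.
rewrite -(big_mkord xpredT (fun N => N * f N)) !split5 //.
have -> : \sum_(5 <= i < K') i * f i = \sum_(5 <= i < K') 4 * f i + \sum_(5 <= i < K') (i - 4) * f i.
  rewrite -big_split /= big_nat_cond [RHS]big_nat_cond; apply: eq_bigr => i /andP[/andP[h _] _].
  by rewrite -mulnDl subnKC // ltnW.
have -> : \sum_(5 <= i < K') (i - 4) * f i = \sum_(1 <= n < M.+1) n * f (n + 4).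
  rewrite -[5]/(1 + 4) big_addn.
  have hm : M.+1 <= K' - 4 by rewrite /K'; lia.
  rewrite (@big_cat_nat _ _ _ M.+1 1 (K' - 4) _ _ (ltn0Sn M) hm) //= [X in _ + X = _]big_nat_cond [X in _ + X = _]big1 ?addn0.
    by apply: eq_bigr => i _; rewrite addnK.
  by move=> i /andP[/andP[h _] _]; rewrite hM // addnK muln0.
rewrite f0 /=.
lia.
Qed.

Theorem theorem5p11 (D : finType) (edge node : D -> D) (o : D) :
  loop_tangle_map edge node o ->
  forall M : nat, (forall n, M < n -> nfaces edge node o (n + 4) = 0) ->
  3 * nfaces edge node o 1 + 2 * nfaces edge node o 2 + nfaces edge node o 3
  = 3 + \sum_(1 <= n < M.+1) n * nfaces edge node o (n + 4).
Proof.
move=> HL M hM.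
apply: (@sum_lemma (nfaces edge node o) (K D) M) => //; first exact: f0.
  move=> N hN; apply: eq_card0 => x; rewrite !inE.
  have h := hK edge node x.
  case: eqP => [e|]; last by rewrite !andbF.
  by move: (leq_trans h hN); rewrite e ltnn.
set onl := on_loop edge node o.
set out := outer edge node o.
set fc := face edge node.
have E : 2 * (fcard node D + fcard fc D) = #|D| + 4 := euler HL.
have C1 : fcard node D = fcard node onl + fcard node [predC onl] := n_compC onl (frel node).
have C2 : #|out| + #|[predC out]| = #|D| := cardC out.
have C3 : #|onl| + #|[predC onl]| = #|D| := cardC onl.
have G1 : fcard fc D = 1 + fcard fc [predC out] := F1 HL.
have G2 := F2 edge node o. have G3 := F3 HL.
have W2 : #|[predC onl]| = fcard node [predC onl] * 4 := V2 HL.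
have W3 : fcard node onl = #|out| := V3 HL.
have W4 : #|onl| + 1 = 3 * #|out| := V4 HL.
rewrite -G3 -G2 -/out -/fc.
lia.
Qed.
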